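(* Consider the system on an Erdős random graph process on $N\ge2$ nodes with noise level $\eta\in(0,1]$. Then in the Markov chain of states $x(k)\in\{\pm1\}^N$, the all-$(+1)$ state and the all-$(-1)$ state are absorbing, and every other state is transient.
   Context: Erdős random graph process: at each time $k$, the graph $G(k)$ on nodes $V=\{1,\dots,N\}$ is a simple undirected graph in which each of the $N(N-1)/2$ possible edges is present independently with probability $1/2$; graphs at different times are independent, and independent of the noises and of $x(0)$. Each node carries $x_i(k)\in\{+1,-1\}$. The neighborhood $N_i(k)$ consists of $i$ and all nodes adjacent to $i$ in $G(k)$; $v_i(k)=\frac{1}{|N_i(k)|}\sum_{j\in N_i(k)}x_j(k)$. Update: $x_i(k+1)=\operatorname{sign}[v_i(k)+\xi_i(k)]$ with $\xi_i(k)$ i.i.d. uniform on $[-\eta,\eta]$ across $i,k$. A state is absorbing if its one-step transition probability to itself is one; transient if, starting from it, it reappears with probability strictly less than one. *)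

(* Defs.v *)
From HB Require Import structures.
From mathcomp Require Import all_boot all_order all_algebra.
Set Implicit Arguments. Unset Strict Implicit. Unset Printing Implicit Defensive.
Import Order.TTheory GRing.Theory Num.Theory.
Local Open Scope ring_scope.

(* A state x in {+1,-1}^N: true encodes +1, false encodes -1. *)
Definition state (N : nat) := {ffun 'I_N -> bool}.

Definition spin (R : realFieldType) (b : bool) : R := if b then 1 else -1.

Definition all_plus (N : nat) : state N := [ffun _ => true].
Definition all_minus (N : nat) : state N := [ffun _ => false].

(* A simple undirected graph on 'I_N is encoded by its edge set, a set of
   pairs (i,j) with i < j.  Each such pair is an edge independently with
   probability 1/2, i.e. the graph is uniformly distributed over all such sets. *)
Definition upper_pairs (N : nat) : {set 'I_N * 'I_N} :=
  [set p : 'I_N * 'I_N | (val p.1 < val p.2)%N].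

Definition simple_graphs (N : nat) : {set {set 'I_N * 'I_N}} :=
  [set E : {set 'I_N * 'I_N} | E \subset upper_pairs N].

Definition adj (N : nat) (E : {set 'I_N * 'I_N}) (i j : 'I_N) : bool :=
  ((i, j) \in E) || ((j, i) \in E).

Definition nbhd (N : nat) (E : {set 'I_N * 'I_N}) (i : 'I_N) : {set 'I_N} :=
  [set j | (j == i) || adj E i j].

Definition vloc (R : realFieldType) (N : nat) (E : {set 'I_N * 'I_N})
    (x : state N) (i : 'I_N) : R :=
  (\sum_(j in nbhd E i) spin R (x j)) / (#|nbhd E i|)%:R.

(* P(v + xi > 0) for xi uniform on [-eta, eta]; the event v + xi = 0 has
   probability zero. *)
Definition pplus (R : realFieldType) (eta v : R) : R :=
  if v <= - eta then 0 else if eta <= v then 1 else (eta + v) / (2 * eta).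

Definition trans (R : realFieldType) (N : nat) (eta : R) (x y : state N) : R :=
  (#|simple_graphs N|%:R)^-1 *
  \sum_(E in simple_graphs N)
     \prod_(i : 'I_N)
        (if y i then pplus eta (vloc R E x i) else 1 - pplus eta (vloc R E x i)).

(* taboo probabilities: taboo eta x n z = probability, starting at x at time 0,
   that x(n+1) = z and x(k) <> x for all 1 <= k <= n. *)
Fixpoint taboo (R : realFieldType) (N : nat) (eta : R) (x : state N) (n : nat)
    (z : state N) : R :=
  match n with
  | 0 => trans eta x z
  | n'.+1 => \sum_(w : state N | w != x) taboo eta x n' w * trans eta w z
  end.

Definition return_within (R : realFieldType) (N : nat) (eta : R) (x : state N)
    (n : nat) : R :=
  \sum_(m < n) taboo eta x m x.

Definition absorbing (R : realFieldType) (N : nat) (eta : R) (x : state N) : Prop :=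
  trans eta x x = 1.

(* transient: the probability of ever returning (the supremum of the
   nondecreasing sequence return_within) is strictly less than one *)
Definition transient (R : realFieldType) (N : nat) (eta : R) (x : state N) : Prop :=
  exists c : R, c < 1 /\ forall n : nat, return_within eta x n <= c.

(* Main.v *)
Require Import Defs.
From HB Require Import structures.
From mathcomp Require Import all_boot all_order all_algebra.
Set Implicit Arguments. Unset Strict Implicit. Unset Printing Implicit Defensive.
Import Order.TTheory GRing.Theory Num.Theory.
Local Open Scope ring_scope.

Section S.
Variables (R : realFieldType) (N : nat) (eta : R).
Hypothesis eta_gt0 : 0 < eta.

Lemma pplus_bounds v : 0 <= pplus eta v <= 1.
Proof.
rewrite /pplus; case: ifP => h1; first by rewrite lexx ler01.
case: ifP => h2; first by rewrite ler01 lexx.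
have hv : - eta < v by rewrite ltNge h1.
have hv2 : v < eta by rewrite ltNge h2.
have e2 : 0 < 2 * eta by rewrite mulr_gt0.
apply/andP; split.
  by rewrite divr_ge0 // ?ltW // addrC -(opprK eta) subr_gt0.
by rewrite ler_pdivrMr // mul1r mulr2n mulrDl !mul1r lerD2l ltW.
Qed.

Definition fac (p : R) (b : bool) := if b then p else 1 - p.

Lemma fac_ge0 v b : 0 <= fac (pplus eta v) b.
Proof. by case/andP: (pplus_bounds v) => h0 h1; case: b => //=; rewrite subr_ge0. Qed.

Lemma card_sg_gt0 : (0 < #|simple_graphs N|)%N.
Proof. by apply/card_gt0P; exists set0; rewrite inE sub0set. Qed.

Lemma trans_ge0 (x y : state N) : 0 <= trans eta x y.
Proof.
rewrite /trans mulr_ge0 ?invr_ge0 ?ler0n // sumr_ge0 // => E _.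
by apply: prodr_ge0 => i _; exact: (fac_ge0 _ (y i)).
Qed.

Lemma trans_sum (x : state N) : \sum_y trans eta x y = 1.
Proof.
rewrite /trans -mulr_sumr exchange_big /=.
rewrite (eq_bigr (fun _ => 1)) ?sumr_const; last first.
  move=> E _.
  rewrite -(bigA_distr_bigA (fun i b => fac (pplus eta (vloc R E x i)) b)) /=.
  by apply: big1 => i _; rewrite big_bool /= addrC subrK.
by rewrite mulVf // pnatr_eq0 -lt0n card_sg_gt0.
Qed.
Hypothesis eta_le1 : eta <= 1.

Lemma trans_const (x y : state N) (v : R) :
  (forall E i, vloc R E x i = v) ->
  (forall i, fac (pplus eta v) (y i) = 1) -> trans eta x y = 1.
Proof.
move=> hv hy; rewrite /trans (eq_bigr (fun _ => 1)) ?sumr_const.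
  by rewrite -[1 *+ _]/(_%:R) mulVf // pnatr_eq0 -lt0n card_sg_gt0.
move=> E _; apply: big1 => i _; rewrite hv; exact: (hy i).
Qed.

Lemma card_nbhd_gt0 (E : {set 'I_N * 'I_N}) i : (0 < #|nbhd E i|)%N.
Proof. by apply/card_gt0P; exists i; rewrite inE eqxx. Qed.

Lemma absorb_plus : absorbing eta (all_plus N).
Proof.
apply: (@trans_const _ _ 1) => [E i|i]; last first.
  have h : - eta < 1 by rewrite (lt_trans _ ltr01) // oppr_lt0.
  by rewrite ffunE /= /pplus (lt_geF h) eta_le1.
rewrite /vloc (eq_bigr (fun _ => 1)) ?sumr_const => [|j _]; last by rewrite ffunE.
by rewrite -[1 *+ _]/(_%:R) mulfV // pnatr_eq0 -lt0n card_nbhd_gt0.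
Qed.
Lemma absorb_minus : absorbing eta (all_minus N).
Proof.
apply: (@trans_const _ _ (-1)) => [E i|i]; last first.
  by rewrite ffunE /= /pplus lerN2 eta_le1 subr0.
rewrite /vloc (eq_bigr (fun _ => -1)) ?sumr_const => [|j _]; last by rewrite ffunE.
by rewrite mulNrn -[1 *+ _]/(_%:R) mulNr mulfV // pnatr_eq0 -lt0n card_nbhd_gt0.
Qed.
Lemma nbhd_full i : nbhd (upper_pairs N) i = setT.
Proof.
apply/setP => j; rewrite !inE /adj !inE /=.
case: ltngtP => //; rewrite ?orbT // => /val_inj ->; by rewrite eqxx.
Qed.

Lemma trans_pos_of (x y : state N) :
  (forall i, 0 < fac (pplus eta (vloc R (upper_pairs N) x i)) (y i)) ->
  0 < trans eta x y.
Proof.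
move=> hp; rewrite /trans mulr_gt0 ?invr_gt0 ?ltr0n ?card_sg_gt0 //.
rewrite (bigD1 (upper_pairs N)) /=; last by rewrite inE subxx.
apply: (@lt_le_trans _ _ (\prod_i fac (pplus eta (vloc R (upper_pairs N) x i)) (y i))).
  by apply: prodr_gt0 => i _; exact: hp.
rewrite lerDl sumr_ge0 // => E _; apply: prodr_ge0 => i _; exact: fac_ge0.
Qed.

Lemma exists_target (x : state N) :
  0 < trans eta x (all_plus N) \/ 0 < trans eta x (all_minus N).
Proof.
set a := (\sum_(j in [set: 'I_N]) spin R (x j)) / (#|[set: 'I_N]|)%:R.
have ha : forall i, vloc R (upper_pairs N) x i = a by move=> i; rewrite /vloc nbhd_full.
have [h|h] := leP a (- eta).
  right; apply: trans_pos_of => i; rewrite ffunE ha /= /pplus h subr0; exact: ltr01.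
left; apply: trans_pos_of => i; rewrite ffunE ha /= /pplus leNgt h /=.
case: ifP => _; first exact: ltr01.
rewrite divr_gt0 ?mulr_gt0 // addrC -(opprK eta) subr_gt0 //.
Qed.
Section Tr.
Variables (x t : state N).
Hypotheses (htt : trans eta t t = 1) (htx : t != x).

Lemma taboo_ge0 n z : 0 <= taboo eta x n z.
Proof.
elim: n z => [|n IH] z /=; first exact: trans_ge0.
by rewrite sumr_ge0 // => w _; rewrite mulr_ge0 ?IH ?trans_ge0.
Qed.

Lemma taboo_mass n :
  \sum_z taboo eta x n.+1 z = \sum_(w | w != x) taboo eta x n w.
Proof.
rewrite /= exchange_big /=; apply: eq_bigr => w _.
by rewrite -mulr_sumr trans_sum mulr1.
Qed.

Lemma taboo_inv n :
  \sum_(m < n.+1) taboo eta x m x + \sum_(w | w != x) taboo eta x n w = 1.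
Proof.
elim: n => [|n IH].
  by rewrite big_ord1 -(trans_sum x) [RHS](bigD1 x) //=.
rewrite big_ord_recr /= -addrA.
have -> : taboo eta x n.+1 x + \sum_(w | w != x) taboo eta x n.+1 w =
  \sum_z taboo eta x n.+1 z by rewrite [RHS](bigD1 x) //=.
by rewrite taboo_mass IH.
Qed.

Lemma taboo_trap n : trans eta x t <= taboo eta x n t.
Proof.
elim: n => [|n IH] //=.
rewrite (bigD1 t) //= htt mulr1; apply: (le_trans IH).
by rewrite lerDl sumr_ge0 // => w _; rewrite mulr_ge0 ?taboo_ge0 ?trans_ge0.
Qed.

Lemma transient_of : 0 < trans eta x t -> transient eta x.
Proof.
move=> hp; exists (1 - trans eta x t); split; first by rewrite ltrBlDr ltrDl.
have hp1 : trans eta x t <= 1.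
  by rewrite -(trans_sum x) (bigD1 t) //= lerDl sumr_ge0 // => z _; exact: trans_ge0.
case=> [|n]; first by rewrite /return_within big_ord0 subr_ge0.
rewrite /return_within (canRL (addrK _) (taboo_inv n)) lerD2l lerN2.
apply: (le_trans (taboo_trap n)).
rewrite (bigD1 t) //= lerDl sumr_ge0 // => z _; exact: taboo_ge0.
Qed.
End Tr.
End S.

Theorem lemma3 (R : realFieldType) (N : nat) (eta : R) :
  (2 <= N)%N -> 0 < eta -> eta <= 1 ->
  absorbing eta (all_plus N) /\ absorbing eta (all_minus N) /\
  (forall x : state N, x != all_plus N -> x != all_minus N -> transient eta x).
Proof.
move=> _ he he1; split; first exact: absorb_plus.
split; first exact: absorb_minus.
move=> x hxp hxm.
have [h|h] := exists_target he x.
  by apply: (transient_of he (t := all_plus N)) => //; [exact: absorb_plus | rewrite eq_sym].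
by apply: (transient_of he (t := all_minus N)) => //; [exact: absorb_minus | rewrite eq_sym].
Qed.
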